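(* Let $W$, $a^\pm$, $r_0$ be as in the context. For any fixed $L\ge1$ and any fixed $V\in\mathcal{X}_L$, the function $c\mapsto E_c(V)$ is continuous on $F:=\{c>0:|E_c(V)|<\infty\}$.
   Context: $W\in C^2_{\mathrm{loc}}(\mathbb{R}^N)$, $a^\pm$ local minima with $W(a^-)<0=W(a^+)$, $a^-$ a global minimum, $W^{-1}([W(a^-),0])$ compact. $r_0>0$ is such that $W\ge0$ on $\{|u-a^+|\le r_0\}$ and $W<0$ on $\{|u-a^-|\le r_0\}$. $E_c(U):=\int_{\mathbb{R}}(\tfrac12|U_x|^2+W(U))e^{cx}dx$; $\mathcal{X}_L:=\{U\in[H^1_{\mathrm{loc}}(\mathbb{R})]^N: |U(x)-a^+|\le r_0\ (x\ge L),\ |U(x)-a^-|\le r_0\ (x\le-L)\}$. *)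

(* Defs.v *)
From HB Require Import structures.
From mathcomp Require Import all_boot all_order all_algebra.
From mathcomp Require Import all_classical all_reals all_analysis.
Set Implicit Arguments. Unset Strict Implicit. Unset Printing Implicit Defensive.
Import Order.TTheory GRing.Theory Num.Theory.
Import numFieldNormedType.Exports.
Local Open Scope classical_set_scope.
Local Open Scope ring_scope.

Definition enorm (R : realType) (N : nat) (u : 'rV[R]_N) : R :=
  Num.sqrt (\sum_(i < N) u 0 i ^+ 2).

Definition ebasis (R : realType) (N : nat) (i : 'I_N) : 'rV[R]_N := delta_mx 0 i.

Definition C2 (R : realType) (N : nat) (W : 'rV[R]_N -> R) : Prop :=
  continuous W /\
  (forall i : 'I_N,
     (forall u, derivable W u (@ebasis R N i)) /\
     continuous (fun u => 'D_(@ebasis R N i) W u) /\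
     (forall j : 'I_N,
        (forall u, derivable (fun v => 'D_(@ebasis R N i) W v) u (@ebasis R N j)) /\
        continuous (fun u => 'D_(@ebasis R N j) (fun v => 'D_(@ebasis R N i) W v) u))).

Definition local_min (R : realType) (N : nat) (W : 'rV[R]_N -> R) (a : 'rV[R]_N) : Prop :=
  \forall u \near a, W a <= W u.

Definition smooth_fun (R : realType) (phi : R -> R) : Prop :=
  exists d : nat -> R -> R, d 0%N = phi /\
    forall (k : nat) (x : R), is_derive x 1 (d k) (d k.+1 x).

Definition compact_support (R : realType) (phi : R -> R) : Prop :=
  exists M : R, forall x, M < `|x| -> phi x = 0.

Definition test_fun (R : realType) (phi : R -> R) : Prop :=
  smooth_fun phi /\ compact_support phi.

Definition L2loc (R : realType) (f : R -> R) : Prop :=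
  measurable_fun setT f /\
  forall a b : R, (\int[lebesgue_measure]_(x in `[a, b]) ((f x) ^+ 2)%:E < +oo)%E.

Definition H1loc_with_deriv (R : realType) (N : nat)
    (U Ux : R -> 'rV[R]_N) : Prop :=
  forall i : 'I_N,
    L2loc (fun x => U x 0 i) /\ L2loc (fun x => Ux x 0 i) /\
    forall phi : R -> R, test_fun phi ->
      (\int[lebesgue_measure]_(x in setT) (U x 0 i * derive1 phi x)%:E
       = - \int[lebesgue_measure]_(x in setT) (Ux x 0 i * phi x)%:E)%E.

Definition XL (R : realType) (N : nat) (aP aM : 'rV[R]_N) (r0 L : R)
    (U Ux : R -> 'rV[R]_N) : Prop :=
  H1loc_with_deriv U Ux /\
  (forall x, L <= x -> enorm (U x - aP) <= r0) /\
  (forall x, x <= - L -> enorm (U x - aM) <= r0).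

Definition Ec (R : realType) (N : nat) (W : 'rV[R]_N -> R) (c : R)
    (U Ux : R -> 'rV[R]_N) : \bar R :=
  (\int[lebesgue_measure]_(x in setT)
     (((2^-1) * enorm (Ux x) ^+ 2 + W (U x)) * expR (c * x))%:E)%E.

(* Main.v *)
Require Import Defs.
From HB Require Import structures.
From mathcomp Require Import all_boot all_order all_algebra.
From mathcomp Require Import all_classical all_reals all_analysis.
From mathcomp Require Import measurable_realfun lebesgue_integral_under.
From mathcomp Require Import lra.
Import Order.TTheory GRing.Theory Num.Theory.
Import numFieldNormedType.Exports.
Local Open Scope classical_set_scope.
Local Open Scope ring_scope.
Lemma fin_integrable d (T : measurableType d) (R : realType)
  (mu : {measure set T -> \bar R}) (D : set T) (f : T -> \bar R) :
  measurable D -> measurable_fun D f ->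
  (\int[mu]_(x in D) f x \is a fin_num)%E ->
  mu.-integrable D f.
Proof.
move=> mD mf hf; apply/integrableP; split => //.
rewrite -[fun x => _]/(abse \o f) fune_abse ge0_integralD //; last 2 first.
- exact: measurable_funepos.
- exact: measurable_funeneg.
move: hf; rewrite integralE fin_numB => /andP[h1 h2].
by rewrite lte_add_pinfty // ltey_eq ?h1 ?h2.
Qed.
Lemma meas_Wcomp (R : realType) (N : nat) (W : 'rV[R]_N -> R) (V : R -> 'rV[R]_N) :
  continuous W -> (forall i, measurable_fun setT (fun x => V x 0 i)) ->
  measurable_fun setT (W \o V).
Proof.
move=> cW mV.
apply: (measurability _ (RGenOpens.measurableE R)).
move=> _ [_ [a [b ->]] <-].
have oO : open (W @^-1` `]a, b[%classic).
  by move/continuousP: cW; apply; exact: interval_open.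
set O := W @^-1` _ in oO *.
pose box (qp : ('rV[rat]_N * 'rV[rat]_N)%type) := [set u : 'rV[R]_N |
  forall i, ratr (qp.1 0 i) < u 0 i < ratr (qp.2 0 i)].
pose Vbox (qp : ('rV[rat]_N * 'rV[rat]_N)%type) := [set x : R |
  forall i, ratr (qp.1 0 i) < V x 0 i < ratr (qp.2 0 i)].
have -> : [set: R] `&` (W \o V) @^-1` `]a, b[%classic =
   \bigcup_qp (if `[< box qp `<=` O >] then Vbox qp else set0).
  apply/seteqP; split => x /=.
  - move=> [_ VxO].
    have := oO (V x) VxO => /nbhs_ballP [e /= e0 He].
    have hq : forall i : 'I_N, exists qp : (rat * rat)%type,
        (V x 0 i - e < ratr qp.1 < V x 0 i) /\ (V x 0 i < ratr qp.2 < V x 0 i + e).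
      move=> i.
      have [q hq] := @rat_in_itvoo R (V x 0 i - e) (V x 0 i) ltac:(lra).
      have [p hp] := @rat_in_itvoo R (V x 0 i) (V x 0 i + e) ltac:(lra).
      by exists (q, p); move: hq hp; rewrite !in_itv /= => -> ->.
    have [f hf] := choice hq.
    exists (\row_i (f i).1, \row_i (f i).2) => //.
    rewrite asboolT.
      by move=> i; rewrite /= !mxE; have [/andP[_ ->] /andP[-> _]] := hf i.
    move=> u /= hu; apply: He; split => // i j; rewrite (ord1 i).
    have := hu j; rewrite !mxE; have [/andP[h1 h2] /andP[h3 h4]] := hf j.
    move=> /andP[h5 h6].
    rewrite -ball_normE /ball_ /= ltr_norml; apply/andP; split; lra.
  - move=> [qp _]; case: ifPn => [/asboolP hb hx|//].
    by split => //; apply: hb; exact: hx.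
apply: countable_bigcupT_measurable; first exact: countableP.
move=> qp; case: ifPn => // _.
have -> : Vbox qp = \bigcap_(i in [set: 'I_N])
    ([set: R] `&` (fun x => V x 0 i) @^-1` `]ratr (qp.1 0 i), ratr (qp.2 0 i)[%classic).
  apply/seteqP; split => x /=.
    by move=> h i _; split => //=; rewrite in_itv /=; exact: h.
  by move=> h i; have [_ /=] := h i Logic.I; rewrite in_itv.
apply: fin_bigcap_measurable; first exact: finite_finset.
by move=> i _; apply: mV => //; exact: measurable_itv.
Qed.

Theorem mainTheorem13 (R : realType) (N : nat) (W : 'rV[R]_N -> R)
    (aP aM : 'rV[R]_N) (r0 : R)
    (hW : C2 W)
    (hP : local_min W aP) (hM : local_min W aM)
    (hWval : W aM < 0 /\ W aP = 0)
    (hglob : forall u, W aM <= W u)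
    (hcpt : compact (W @^-1` `[W aM, 0]))
    (hr0 : 0 < r0)
    (hr0P : forall u, enorm (u - aP) <= r0 -> 0 <= W u)
    (hr0M : forall u, enorm (u - aM) <= r0 -> W u < 0)
    (L : R) (hL : 1 <= L) (V Vx : R -> 'rV[R]_N)
    (hV : XL aP aM r0 L V Vx) :
  {within [set c | 0 < c /\ Ec W c V Vx \is a fin_num],
    continuous (fun c => fine (Ec W c V Vx))}.
Proof.
have [cW _] := hW.
case: hV => [hH _].
pose g := fun x => 2^-1 * enorm (Vx x) ^+ 2 + W (V x).
have en2 : forall u : 'rV[R]_N, enorm u ^+ 2 = \sum_(i < N) u 0 i ^+ 2.
  move=> u; rewrite /enorm sqr_sqrtr // sumr_ge0 // => i _; exact: sqr_ge0.
have mg : measurable_fun setT g.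
  apply: measurable_funD.
  - apply: measurable_funM; first exact: measurable_cst.
    rewrite (_ : (fun x => enorm (Vx x) ^+ 2) = (fun x => \sum_(i < N) Vx x 0 i ^+ 2)); last first.
      by apply/funext => x; rewrite en2.
    apply: measurable_sum => i; apply: measurable_funX.
    exact: (hH i).2.1.1.
  - exact: (@meas_Wcomp R N W V cW (fun i => (hH i).1.1)).
have mge : forall c, measurable_fun setT (fun x => g x * expR (c * x)).
  move=> c; apply: measurable_funM => //.
  apply: measurableT_comp; first exact: measurable_expR.
  by apply: measurable_funM => //; exact: measurable_cst.
pose Fs := [set c : R | 0 < c /\ Ec W c V Vx \is a fin_num].
have intF : forall c, Fs c ->
    lebesgue_measure.-integrable setT (EFin \o (fun x => g x * expR (c * x))).
  move=> c [_ hc]; apply: fin_integrable => //.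
  - by apply/measurable_EFinP; exact: (mge c).
apply/subspace_continuousP => c Fc.
have [c2 [Fc2 [cc2 nc2]]] : exists c2, Fs c2 /\ c <= c2 /\
    \forall t \near c, Fs t -> t <= c2.
  case: (pselect (exists c2, Fs c2 /\ c < c2)) => [[c2 [F2 lt2]]|no].
    exists c2; split => //; split; first exact: ltW.
    have hc2 : c \in `]c - 1, c2[ by rewrite in_itv /= lt2 andbT; lra.
    near=> t => _.
    have : t \in `]c - 1, c2[ by near: t; exact: near_in_itvoo hc2.
    by rewrite in_itv /= => /andP[_ h]; exact: ltW.
  exists c; split => //; split => //; near=> t => Ft.
  rewrite leNgt; apply/negP => ct; apply: no; by exists t.
have [c1 [Fc1 [c1c nc1]]] : exists c1, Fs c1 /\ c1 <= c /\
    \forall t \near c, Fs t -> c1 <= t.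
  case: (pselect (exists c1, Fs c1 /\ c1 < c)) => [[c1 [F1 lt1]]|no].
    exists c1; split => //; split; first exact: ltW.
    have hc1 : c \in `]c1, c + 1[ by rewrite in_itv /= lt1 /=; lra.
    near=> t => _.
    have : t \in `]c1, c + 1[ by near: t; exact: near_in_itvoo hc1.
    by rewrite in_itv /= => /andP[h _]; exact: ltW.
  exists c; split => //; split => //; near=> t => Ft.
  rewrite leNgt; apply/negP => ct; apply: no; by exists t.
pose clamp := fun t => Num.max c1 (Num.min t c2).
have c12 : c1 <= c2 by exact: le_trans c1c cc2.
have clampb : forall t, c1 <= clamp t <= c2.
  move=> t; rewrite /clamp le_max lexx /= ge_max c12 /= ge_min lexx orbT //.
pose f := fun t y => g y * expR (clamp t * y).
pose Gd := fun y => `|g y| * (expR (c1 * y) + expR (c2 * y)).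
have fub : forall t y, `|f t y| <= Gd y.
  move=> t y; rewrite /f /Gd normrM (ger0_norm (expR_ge0 _)).
  apply: ler_wpM2l => //.
  have /andP[h1 h2] := clampb t.
  have [y0|y0] := leP 0 y.
    apply: ler_wpDl; first exact: expR_ge0.
    by rewrite ler_expR; apply: ler_wpM2r.
  apply: ler_wpDr; first exact: expR_ge0.
  by rewrite ler_expR; apply: ler_wnM2r => //; exact: ltW.
have intG : lebesgue_measure.-integrable setT (EFin \o Gd).
  have i1 := integrable_norm (intF _ Fc1).
  have i2 := integrable_norm (intF _ Fc2).
  apply: eq_integrable (integrableD _ i1 i2) => // y _.
  by rewrite /Gd /= mulrDr !normrM !(ger0_norm (expR_ge0 _)).
have Gd0 : forall y, 0 <= Gd y by move=> y; exact: le_trans (normr_ge0 _) (fub c y).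
have intf : forall t, `]c - 1, c + 1[%classic t ->
    lebesgue_measure.-integrable setT (EFin \o f t).
  move=> t _; apply: le_integrable intG => //.
  - apply/measurable_EFinP; apply: measurable_funM => //.
    apply: measurableT_comp; first exact: measurable_expR.
    by apply: measurable_funM => //; exact: measurable_cst.
  - by move=> y _ /=; rewrite lee_fin (ger0_norm (Gd0 y)); exact: fub.
have cc : continuous clamp.
  move=> x; apply: (@continuous_max R R (fun=> c1) (fun t => Num.min t c2) x).
    exact: cst_continuous.
  apply: (@continuous_min R R idfun (fun=> c2) x); first exact: cvg_id.
  exact: cst_continuous.
have cf : {ae lebesgue_measure, forall y, setT y ->
    {in `]c - 1, c + 1[%classic, continuous (f ^~ y)}}.
  apply: aeW => y _ t _.
  apply: cvgM; first exact: cvg_cst.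
  apply: (@continuous_comp _ _ _ (fun t => clamp t * y) expR); last exact: continuous_expR.
  by apply: cvgMl; exact: cc.
have gub : forall t, `]c - 1, c + 1[%classic t ->
    {ae lebesgue_measure, forall y, setT y -> `|f t y| <= Gd y}.
  by move=> t _; apply: aeW => y _; exact: fub.
have hint := continuity_under_integral measurableT intf cf intG gub.
have hc : c \in `]c - 1, c + 1[%classic by rewrite inE /= in_itv /=; apply/andP; split; lra.
have K := hint c hc.
have eqc : forall t, c1 <= t <= c2 ->
    fine (Ec W t V Vx) = \int[lebesgue_measure]_(x in setT) f t x.
  move=> t /andP[h1 h2].
  have ct : clamp t = t by rewrite /clamp min_l // max_r.
  rewrite /Rintegral /Ec; congr fine; apply: eq_integral => x _.
  by rewrite /f ct.
have h12 : \forall t \near c, Fs t -> c1 <= t <= c2.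
  near=> t => Ft.
  have /(_ Ft) -> : Fs t -> c1 <= t by near: t; exact: nc1.
  by have /(_ Ft) -> : Fs t -> t <= c2 by near: t; exact: nc2.
change (fine (Ec W t V Vx) @[t --> within Fs (nbhs c)] --> fine (Ec W c V Vx)).
rewrite (eqc c) ?c1c ?cc2 //.
apply: cvg_trans; last exact: (cvg_within_filter _ K).
apply: near_eq_cvg.
move: h12; apply: filterS => t h Ft.
by rewrite eqc //; exact: h.
Unshelve. all: by end_near.
Qed.
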